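(* Let $\Gamma$ be a labeled graph with $V$ vertices and $E$ edges, let $k\ge0$ and let $D,C_1,\ldots,C_V$ be symbols. Then $$\big(\lambda_\Gamma(C_1,\ldots,C_V)\big)_{,\mu_1\ldots\mu_k}J^{\mu_1\nu_1}\cdots J^{\mu_k\nu_k}D_{,\nu_1\ldots\nu_k}=\sum_{\Gamma'}\lambda_{\Gamma'}(C_1,\ldots,C_V,D),$$ where the sum runs over all labeled graphs $\Gamma'$ with $V+1$ vertices and $E+k$ edges obtained from $\Gamma$ (keeping its vertex and edge labels) by adding a vertex labeled $V+1$ and $k$ edges labeled $E+1,\ldots,E+k$, each joining some vertex of $\Gamma$ to the vertex $V+1$.
   Context: Coordinates $z=(z^1,\ldots,z^{2N})=(x,p)$ on $T^*\mathbb{R}^N$, $(J^{\mu\nu})=\begin{pmatrix}0&I_N\\-I_N&0\end{pmatrix}$, $C_{,\mu_1\ldots\mu_k}$ denotes partial derivatives, repeated indices summed. A labeled graph with $V$ vertices and $E$ edges is a map $s:\{1,\ldots,E\}\to\mathcal{P}_2\{1,\ldots,V\}$ (edge $e$ joins the vertices in $s(e)$); an edge with $s(e)=\{i,j\}$, $i<j$, is oriented $i\to j$. $\lambda_\Gamma(C_1,\ldots,C_V)$: place $C_v$ at vertex $v$ and a factor $J^{\mu_e\nu_e}$ at each edge $e$, differentiate $C_v$ by $\partial_{z^{\mu_e}}$ for each edge $e$ leaving $v$ and by $\partial_{z^{\nu_e}}$ for each edge entering $v$, multiply and sum over all indices. *)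

(* Defs.v *)
From HB Require Import structures.
From mathcomp Require Import all_boot all_order all_algebra.
From mathcomp Require Import all_classical all_reals all_analysis.
Set Implicit Arguments. Unset Strict Implicit. Unset Printing Implicit Defensive.
Import Order.TTheory GRing.Theory Num.Theory.
Import numFieldNormedType.Exports.
Local Open Scope ring_scope.

Section Defs.
Variables (R : realType) (N : nat).

(* phase space T^* R^N = R^(2N), coordinates z = (x, p) indexed by 'I_(N + N) *)
Definition pt := 'rV[R]_(N + N).

Definition pd (i : 'I_(N + N)) (f : pt -> R) : pt -> R :=
  fun z => 'D_(delta_mx 0 i : pt) f z.

Definition pds (s : seq 'I_(N + N)) (f : pt -> R) : pt -> R := foldr pd f s.

Definition smooth (f : pt -> R) : Prop :=
  forall (s : seq 'I_(N + N)) (z : pt), differentiable (pds s f) z.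

(* the symplectic matrix J = [[0, I_N], [-I_N, 0]] *)
Definition Jsymp (i j : 'I_(N + N)) : R :=
  if (i < N)%N && (j == (i + N)%N :> nat) then 1
  else if (N <= i)%N && (i == (j + N)%N :> nat) then -1 else 0.

(* a labeled graph with V vertices and E edges: edge e joins (s e).1 -> (s e).2,
   the 2-element set {(s e).1, (s e).2} being oriented from smaller to larger *)
Definition wf_graph (V E : nat) (s : {ffun 'I_E -> 'I_V * 'I_V}) : bool :=
  [forall e, ((s e).1 < (s e).2)%N].

(* indices by which C_v is differentiated: mu_e for edges leaving v, nu_e for
   edges entering v (in order of the edge labels) *)
Definition vertex_indices (V E : nat) (s : {ffun 'I_E -> 'I_V * 'I_V})
  (mu nu : {ffun 'I_E -> 'I_(N + N)}) (v : 'I_V) : seq 'I_(N + N) :=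
  [seq (if (s e).1 == v then mu e else nu e)
     | e <- enum 'I_E & ((s e).1 == v) || ((s e).2 == v)].

Definition lambda (V E : nat) (s : {ffun 'I_E -> 'I_V * 'I_V})
  (C : 'I_V -> pt -> R) : pt -> R :=
  fun z => \sum_(mu : {ffun 'I_E -> 'I_(N + N)})
           \sum_(nu : {ffun 'I_E -> 'I_(N + N)})
             (\prod_(e : 'I_E) Jsymp (mu e) (nu e)) *
             \prod_(v : 'I_V) pds (vertex_indices s mu nu v) (C v) z.

Definition ext_fam (V : nat) (C : 'I_V -> pt -> R) (D : pt -> R)
  (v : 'I_V.+1) : pt -> R :=
  match unlift ord_max v with Some w => C w | None => D end.

(* Gamma' is obtained from Gamma by adding vertex V+1 (= ord_max) and
   k edges labeled E+1..E+k (= rshift E i), each joining a vertex of Gamma to V+1 *)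
Definition extends (V E k : nat) (s : {ffun 'I_E -> 'I_V * 'I_V})
  (s' : {ffun 'I_(E + k) -> 'I_V.+1 * 'I_V.+1}) : bool :=
  wf_graph s' &&
  [forall e : 'I_E, s' (lshift k e) == (widen_ord (leqnSn V) (s e).1,
                                        widen_ord (leqnSn V) (s e).2)] &&
  [forall i : 'I_k, ((s' (rshift E i)).1 != ord_max) &&
                    ((s' (rshift E i)).2 == ord_max)].

End Defs.

(* Main.v *)
Require Import Defs.
From HB Require Import structures.
From mathcomp Require Import all_boot all_order all_algebra.
From mathcomp Require Import all_classical all_reals all_analysis.
Import Order.TTheory GRing.Theory Num.Theory.
Import numFieldNormedType.Exports.
Local Open Scope ring_scope.

From mathcomp Require Import ring lra.
Set Implicit Arguments. Unset Strict Implicit. Unset Printing Implicit Defensive.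


Section Schwarz.
Context {R : realType} {V : normedModType R}.

Lemma diff_eps (g : V -> R) x : differentiable g x -> forall e : R, 0 < e ->
  exists2 d : R, 0 < d & forall y, `|y| < d -> `|g (x + y) - g x - 'd g x y| <= e * `|y|.
Proof.
move=> /diff_locally dg e e0.
have := (eqaddoP _ _ _ _).1 dg e e0.
move=> /nbhs_norm0P [d d0 Hd]; exists d => // y yd.
have := Hd y yd; rewrite /= !fctE /=.
by rewrite opprD addrA [x + y]addrC.
Qed.

Lemma line_derive (f : V -> R) p a (s0 : R) :
  derivable (fun s : R => f (p + s *: a)) s0 1 = derivable f (p + s0 *: a) a /\
  'D_1 (fun s : R => f (p + s *: a)) s0 = 'D_a f (p + s0 *: a).
Proof.
suff E : (fun h : R => h^-1 *: (((fun s : R => f (p + s *: a)) \o shift s0) (h *: 1) - f (p + s0 *: a)))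
   = (fun h : R => h^-1 *: ((f \o shift (p + s0 *: a)) (h *: a) - f (p + s0 *: a))).
  by rewrite /derivable /derive E.
apply: funext => h /=.
by rewrite [h%:A]mulr1 scalerDl addrCA.
Qed.


Lemma half_schwarz (f : V -> R) (a b x : V) (e : R) :
  (forall y, differentiable f y) -> differentiable ('D_a f) x -> 0 < e ->
  exists2 d : R, 0 < d & forall t : R, 0 < t -> t < d ->
   `|(f (x + t *: b + t *: a) - f (x + t *: a) - (f (x + t *: b) - f x))
      - t ^+ 2 * 'D_b ('D_a f) x| <= e * t ^+ 2.
Proof.
move=> df dg e0.
set M := `|a| + `|b| + 1.
have M0 : 0 < M by rewrite /M; have := normr_ge0 a; have := normr_ge0 b; lra.
have e'0 : 0 < e / (2 * M) by rewrite divr_gt0 // mulr_gt0.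
have [d0 d00 Hd0] := diff_eps dg e'0.
exists (d0 / M); first by rewrite divr_gt0.
move=> t t0 td.
have tMd : t * M < d0 by rewrite -ltr_pdivlMr.
set g := 'D_a f.
set L := 'd g x.
pose phi := fun s : R => f (x + t *: b + s *: a) - f (x + s *: a).
have dphi s : derivable phi s 1.
  apply: derivableB.
    by rewrite (line_derive f (x + t *: b) a s).1; exact: diff_derivable.
  by rewrite (line_derive f x a s).1; exact: diff_derivable.
have Dphi s : 'D_1 phi s = g (x + t *: b + s *: a) - g (x + s *: a).
  rewrite deriveB.
  - by rewrite (line_derive f (x + t *: b) a s).2 (line_derive f x a s).2.
  - by rewrite (line_derive f (x + t *: b) a s).1; exact: diff_derivable.
  - by rewrite (line_derive f x a s).1; exact: diff_derivable.
have [c c0t Hc] : exists2 c, c \in `]0, t[%R & phi t - phi 0 = 'D_1 phi c * (t - 0).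
  apply: (@MVT R phi (fun s => 'D_1 phi s)) => //.
  by apply: (derivable_within_continuous (i := `[0, t]%R)) => y _.
move: c0t; rewrite in_itv /= => /andP [c0 ct].
have -> : f (x + t *: b + t *: a) - f (x + t *: a) - (f (x + t *: b) - f x) = phi t - phi 0.
  by rewrite /phi !scale0r !addr0.
rewrite Hc Dphi subr0.
set y1 := t *: b + c *: a.
set y2 := c *: a.
have ny1 : `|y1| <= t * M.
  rewrite /y1 (le_trans (ler_normD _ _)) // !normrZ !ger0_norm ?(ltW t0) ?(ltW c0) //.
  have := normr_ge0 a; have := normr_ge0 b.
  have : c * `|a| <= t * `|a| by rewrite ler_wpM2r // ltW.
  rewrite /M; nra.
have ny2 : `|y2| <= t * M.
  rewrite /y2 normrZ ger0_norm ?(ltW c0) //.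
  have := normr_ge0 a; have := normr_ge0 b.
  have : c * `|a| <= t * `|a| by rewrite ler_wpM2r // ltW.
  rewrite /M; nra.
have r1 := Hd0 y1 (le_lt_trans ny1 tMd).
have r2 := Hd0 y2 (le_lt_trans ny2 tMd).
have E1 : x + t *: b + c *: a = x + y1 by rewrite /y1 addrA.
have E2 : x + c *: a = x + y2 by [].
have EL : L y1 - L y2 = t * L b by rewrite /y1 linearD addrK linearZ.
rewrite E1 (deriveE _ dg) -/L.
have -> : (g (x + y1) - g (x + y2)) * t - t ^+ 2 * L b =
  t * ((g (x + y1) - g x - L y1) - (g (x + y2) - g x - L y2)).
  by rewrite -[t ^+ 2 * L b]mulrA -EL; ring.
rewrite normrM ger0_norm ?(ltW t0) //.
have H : `|(g (x + y1) - g x - L y1) - (g (x + y2) - g x - L y2)| <= e / (2 * M) * (2 * (t * M)).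
  apply: (le_trans (ler_normB _ _)).
  move: r1 r2; rewrite -/g -/L => r1 r2.
  have := ler_wpM2l (ltW e'0) ny1; have := ler_wpM2l (ltW e'0) ny2.
  lra.
have -> : e * t ^+ 2 = t * (e / (2 * M) * (2 * (t * M))).
  by field; rewrite gt_eqF.
by rewrite ler_wpM2l // ltW.
Qed.

Lemma schwarz (f : V -> R) (a b x : V) :
  (forall y, differentiable f y) -> differentiable ('D_a f) x ->
  differentiable ('D_b f) x -> 'D_b ('D_a f) x = 'D_a ('D_b f) x.
Proof.
move=> df dga dgb.
set P := 'D_b ('D_a f) x; set Q := 'D_a ('D_b f) x.
apply/eqP; apply/negPn/negP => nPQ.
have PQ0 : 0 < `|P - Q| by rewrite normr_gt0 subr_eq0.
have e0 : 0 < `|P - Q| / 4 by rewrite divr_gt0.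
have [d1 d10 H1] := half_schwarz b df dga e0.
have [d2 d20 H2] := half_schwarz a df dgb e0.
set m := Num.min d1 d2.
have m0 : 0 < m by rewrite lt_min d10 d20.
have md1 : m <= d1 by rewrite ge_min lexx.
have md2 : m <= d2 by rewrite ge_min lexx orbT.
have t0 : 0 < m / 2 by rewrite divr_gt0.
have tm : m / 2 < m by rewrite gtr_pMr // invf_lt1 // ltr1n.
have := H1 _ t0 (lt_le_trans tm md1).
have := H2 _ t0 (lt_le_trans tm md2).
rewrite -/P -/Q.
set t := m / 2.
rewrite [x + t *: a + t *: b]addrAC.
set A := f (x + t *: b + t *: a).
set B := f (x + t *: a); set C := f (x + t *: b); set D := f x.
move=> h2 h1.
clearbody A B C D.
have : `|t ^+ 2 * (P - Q)| <= `|P - Q| / 4 * t ^+ 2 + `|P - Q| / 4 * t ^+ 2.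
  have -> : t ^+ 2 * (P - Q) = - (A - B - (C - D) - t ^+ 2 * P) + (A - C - (B - D) - t ^+ 2 * Q).
    ring.
  apply: (le_trans (ler_normD _ _)).
  rewrite normrN.
  have := lerD h1 h2.
  by [].
rewrite normrM ger0_norm ?exprn_ge0 ?(ltW t0) //.
have t20 : 0 < t ^+ 2 by rewrite exprn_gt0.
set u := `|P - Q|; set s := t ^+ 2 => H.
have s0 : 0 < s by rewrite /s exprn_gt0.
have u0 : 0 < u by [].
clearbody u s.
have E : u / 4 * s + u / 4 * s = s * (u / 2) by field.
move: H; rewrite E ler_pM2l // => H'.
have : u / 2 < u by rewrite gtr_pMr // invf_lt1 // ltr1n.
by rewrite ltNge H'.
Qed.

End Schwarz.


Section FFun.
Context {R : realType}.

Definition ffcons (T : finType) k (u : T) (w : {ffun 'I_k -> T}) : {ffun 'I_k.+1 -> T} :=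
  [ffun i => if unlift ord0 i is Some j then w j else u].

Lemma ffcons0 (T : finType) k u (w : {ffun 'I_k -> T}) : ffcons u w ord0 = u.
Proof. by rewrite ffunE unlift_none. Qed.

Lemma ffconsS (T : finType) k u (w : {ffun 'I_k -> T}) j : ffcons u w (lift ord0 j) = w j.
Proof. by rewrite ffunE liftK. Qed.

Lemma big_ffunS (T : finType) k (G : {ffun 'I_k.+1 -> T} -> R) :
  \sum_w G w = \sum_(u : T) \sum_(w : {ffun 'I_k -> T}) G (ffcons u w).
Proof.
rewrite pair_bigA /=.
rewrite (reindex (fun p : T * {ffun 'I_k -> T} => ffcons p.1 p.2)) //=.
exists (fun w : {ffun 'I_k.+1 -> T} => (w ord0, [ffun j => w (lift ord0 j)])).
  move=> [u w] _ /=; congr (_, _); first by rewrite ffcons0.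
  by apply/ffunP => j; rewrite ffunE ffconsS.
move=> w _; apply/ffunP => i; rewrite ffunE.
by case: unliftP => [j ->|->]; rewrite ?ffunE.
Qed.

Definition ffjoin (T : finType) E k (a : {ffun 'I_E -> T}) (b : {ffun 'I_k -> T}) :
  {ffun 'I_(E + k) -> T} :=
  [ffun x : 'I_(E + k) => match fintype.split x with inl i => a i | inr j => b j end].

Lemma ffjoinl (T : finType) E k (a : {ffun 'I_E -> T}) (b : {ffun 'I_k -> T}) i :
  ffjoin a b (lshift k i) = a i.
Proof. by rewrite ffunE (unsplitK (inl _)). Qed.

Lemma ffjoinr (T : finType) E k (a : {ffun 'I_E -> T}) (b : {ffun 'I_k -> T}) j :
  ffjoin a b (rshift E j) = b j.
Proof. by rewrite ffunE (unsplitK (inr _)). Qed.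

Lemma big_ffun_add (T : finType) E k (G : {ffun 'I_(E + k) -> T} -> R) :
  \sum_w G w = \sum_(a : {ffun 'I_E -> T}) \sum_(b : {ffun 'I_k -> T}) G (ffjoin a b).
Proof.
rewrite pair_bigA /=.
rewrite (reindex (fun p : {ffun 'I_E -> T} * {ffun 'I_k -> T} => ffjoin p.1 p.2)) //=.
exists (fun w : {ffun 'I_(E + k) -> T} => ([ffun i => w (lshift k i)], [ffun j => w (rshift E j)])).
  move=> [a b] _ /=; congr (_, _); apply/ffunP => j; by rewrite ffunE ?ffjoinl ?ffjoinr.
move=> w _; apply/ffunP => i; rewrite ffunE.
by rewrite -{2}(splitK i); case: (fintype.split i) => j /=; rewrite ffunE.
Qed.

End FFun.


Section PD.
Context {R : realType} {N : nat}.
Local Notation pt := (pt R N).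
Implicit Types (f g : pt -> R).

Lemma pds_cat s1 s2 f : pds (s1 ++ s2) f = pds s1 (pds s2 f).
Proof. exact: foldr_cat. Qed.

Lemma smooth_pds t f : smooth f -> smooth (pds t f).
Proof. by move=> Hf s z; rewrite -pds_cat. Qed.

Lemma pd_comm i j f : smooth f -> pd i (pd j f) = pd j (pd i f).
Proof.
move=> Hf; apply: funext => z.
exact: (schwarz (fun y => Hf [::] y) (Hf [:: j] z) (Hf [:: i] z)).
Qed.

Lemma pds_rot1 x l f : smooth f -> pds (x :: l) f = pds (l ++ [:: x]) f.
Proof.
move=> Hf; elim: l => [//|y l IH] /=.
rewrite -IH /=.
have := pd_comm x y (smooth_pds l Hf).
done.
Qed.

Lemma pds_catC s t f : smooth f -> pds (s ++ t) f = pds (t ++ s) f.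
Proof.
move=> Hf; elim: s t => [|x s IH] t; first by rewrite cats0.
rewrite cat_cons pds_rot1 //.
have e1 : (s ++ t) ++ [:: x] = s ++ (t ++ [:: x]) by rewrite catA.
have e2 : (t ++ [:: x]) ++ s = t ++ x :: s by rewrite -catA.
by rewrite e1 IH e2.
Qed.

Lemma pd_sumP (X : Type) (r : seq X) (F : X -> pt -> R) i z :
  (forall x, differentiable (F x) z) ->
  differentiable (fun y => \sum_(x <- r) F x y) z /\
  pd i (fun y => \sum_(x <- r) F x y) z = \sum_(x <- r) pd i (F x) z.
Proof.
move=> HF; elim: r => [|x r [IH1 IH2]].
  have -> : (fun y => \sum_(x <- [::]) F x y) = cst 0 by apply: funext => y; rewrite big_nil.
  by rewrite big_nil; split; [exact: differentiable_cst | rewrite /pd derive_cst].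
have -> : (fun y => \sum_(x0 <- x :: r) F x0 y) = F x + (fun y => \sum_(x0 <- r) F x0 y).
  by apply: funext => y; rewrite big_cons.
rewrite big_cons; split; first exact: differentiableD.
move: IH2; rewrite /pd => IH2.
by rewrite deriveD ?IH2 //; exact: diff_derivable.
Qed.

Lemma diff_prod (X : Type) (r : seq X) (F : X -> pt -> R) z :
  (forall x, differentiable (F x) z) ->
  differentiable (fun y => \prod_(x <- r) F x y) z.
Proof.
move=> HF; elim: r => [|x r IH].
  have -> : (fun y => \prod_(x <- [::]) F x y) = cst 1 by apply: funext => y; rewrite big_nil.
  exact: differentiable_cst.
have -> : (fun y => \prod_(x0 <- x :: r) F x0 y) = F x * (fun y => \prod_(x0 <- r) F x0 y).
  by apply: funext => y; rewrite big_cons.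
exact: differentiableM.
Qed.

Lemma pd_scal c g i z : differentiable g z -> pd i (fun y => c * g y) z = c * pd i g z.
Proof. by move=> Hg; rewrite /pd deriveMl //; exact: diff_derivable. Qed.

Lemma pd_prod n (F : 'I_n -> pt -> R) i z :
  (forall v, differentiable (F v) z) ->
  pd i (fun y => \prod_(v < n) F v y) z =
  \sum_(w < n) \prod_(v < n) (if v == w then pd i (F v) z else F v z).
Proof.
elim: n F => [|n IH] F HF.
  have -> : (fun y => \prod_(v < 0) F v y) = cst 1 by apply: funext => y; rewrite big_ord0.
  by rewrite big_ord0 /pd derive_cst.
have -> : (fun y => \prod_(v < n.+1) F v y) =
   (fun y => \prod_(v < n) F (widen_ord (leqnSn n) v) y) * F ord_max.
  by apply: funext => y; rewrite big_ord_recr.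
have Hd : differentiable (fun y => \prod_(v < n) F (widen_ord (leqnSn n) v) y) z.
  exact: diff_prod.
rewrite /pd deriveM; [|exact: diff_derivable|exact: diff_derivable].
have := IH (fun v => F (widen_ord (leqnSn n) v)) (fun v => HF _); rewrite /pd => ->.
have wm (w : 'I_n) : (ord_max == widen_ord (leqnSn n) w) = false.
  by rewrite -val_eqE /= gtn_eqF.
have ww (v w : 'I_n) : (widen_ord (leqnSn n) v == widen_ord (leqnSn n) w) = (v == w).
  by rewrite -val_eqE.
rewrite [RHS]big_ord_recr /= [X in _ = _ + X]big_ord_recr /= eqxx.
under [X in _ = X + _]eq_bigr => w _ do rewrite big_ord_recr /= wm.
under [X in _ = _ + X * _]eq_bigr => v _ do rewrite eq_sym wm.
under [X in _ = X + _]eq_bigr => w _ do under eq_bigr => v _ do rewrite ww.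
rewrite -mulr_suml [RHS]addrC.
congr (_ + _); exact: mulrC.
Qed.

End PD.


Lemma filter_enumS (X : Type) k (mu : 'I_k.+1 -> X) (P : pred 'I_k.+1) :
  [seq mu i | i <- enum 'I_k.+1 & P i] =
  (if P ord0 then [:: mu ord0] else [::]) ++
  [seq mu (lift ord0 i) | i <- enum 'I_k & P (lift ord0 i)].
Proof.
rewrite enum_ordSl /= filter_map.
by case: (P ord0) => /=; rewrite -map_comp.
Qed.

Section PD2.
Context {R : realType} {N : nat}.
Local Notation pt := (pt R N).
Implicit Types (f g : pt -> R).

Lemma pds_cons a l f : pds (a :: l) f = pd a (pds l f).
Proof. by []. Qed.

Lemma diff_sum (X : Type) (r : seq X) (F : X -> pt -> R) z :
  (forall x, differentiable (F x) z) ->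
  differentiable (fun y => \sum_(x <- r) F x y) z.
Proof.
move=> HF; elim: r => [|x r IH].
  have -> : (fun y => \sum_(x <- [::]) F x y) = cst 0 by apply: funext => y; rewrite big_nil.
  exact: differentiable_cst.
have -> : (fun y => \sum_(x0 <- x :: r) F x0 y) = F x + (fun y => \sum_(x0 <- r) F x0 y).
  by apply: funext => y; rewrite big_cons.
exact: differentiableD.
Qed.

Lemma diff_scal c g z : differentiable g z -> differentiable (fun y => c * g y) z.
Proof.
move=> Hg; have := differentiableM (differentiable_cst c z) Hg.
by [].
Qed.

Lemma leibniz V (F : 'I_V -> pt -> R) : (forall v, smooth (F v)) ->
  forall k (mu : 'I_k -> 'I_(N + N)),
  pds [seq mu i | i <- enum 'I_k] (fun y => \prod_(v < V) F v y) =
  fun z => \sum_(w : {ffun 'I_k -> 'I_V})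
     \prod_(v < V) pds [seq mu i | i <- enum 'I_k & w i == v] (F v) z.
Proof.
move=> HF; elim=> [|k IH] mu.
  apply: funext => z; rewrite enum_ord0 /=.
  rewrite sumr_const card_ffun !card_ord expn0.
  by [].
apply: funext => z.
rewrite enum_ordSl map_cons -map_comp pds_cons (IH (mu \o lift ord0)).
have Hd : forall w : {ffun 'I_k -> 'I_V}, differentiable (fun y => \prod_(v < V)
     pds [seq (mu \o lift ord0) i | i <- enum 'I_k & w i == v] (F v) y) z.
  by move=> w; apply: diff_prod => v; exact: HF.
rewrite (pd_sumP _ _ Hd).2.
rewrite big_ffunS exchange_big /=.
apply: eq_bigr => w _.
rewrite pd_prod; last by move=> v; exact: HF.
apply: eq_bigr => u _; apply: eq_bigr => v _.
rewrite ffcons0 filter_map.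
rewrite [in RHS](@eq_filter _ _ (fun i => w i == v)); last by move=> i /=; rewrite ffconsS.
by rewrite eq_sym; case: eqP => _ /=; rewrite -map_comp.
Qed.

Lemma smooth_prod V (F : 'I_V -> pt -> R) : (forall v, smooth (F v)) ->
  smooth (fun y => \prod_(v < V) F v y).
Proof.
move=> HF s z.
have E : s = [seq tnth (in_tuple s) i | i <- enum 'I_(size s)] by rewrite map_tnth_enum.
rewrite E leibniz //.
apply: diff_sum => w; apply: diff_prod => v; exact: HF.
Qed.

Lemma pds_lin (X : finType) (c : X -> R) (G : X -> pt -> R) :
  (forall x, smooth (G x)) -> forall t,
  pds t (fun y => \sum_x c x * G x y) = fun z => \sum_x c x * pds t (G x) z.
Proof.
move=> HG; elim=> [//|i t IH].
apply: funext => z.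
have Hd : forall x, differentiable (fun y => c x * pds t (G x) y) z.
  by move=> x; apply: diff_scal; exact: HG.
rewrite pds_cons IH (pd_sumP _ _ Hd).2.
apply: eq_bigr => x _; rewrite pd_scal //; exact: HG.
Qed.

End PD2.


Lemma enum_split E k : enum 'I_(E + k) =
  [seq lshift k i | i <- enum 'I_E] ++ [seq rshift E i | i <- enum 'I_k].
Proof.
apply: (inj_map val_inj); rewrite map_cat val_enum_ord iotaD.
rewrite -(map_comp val (lshift k)) -(map_comp val (@rshift E k)).
congr (_ ++ _).
  by rewrite (@eq_map _ _ _ val) // val_enum_ord.
rewrite (@eq_map _ _ _ (addn E \o val)) // map_comp val_enum_ord.
by rewrite -iotaDl addn0.
Qed.

Section Graph.
Variables (N V E k : nat) (s : {ffun 'I_E -> 'I_V * 'I_V}).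

Local Notation wid := (widen_ord (leqnSn V)).

Definition Sg (w : {ffun 'I_k -> 'I_V}) : {ffun 'I_(E + k) -> 'I_V.+1 * 'I_V.+1} :=
  [ffun x : 'I_(E + k) => match fintype.split x with
     | inl e => (wid (s e).1, wid (s e).2)
     | inr i => (wid (w i), ord_max) end].

Lemma Sg_l w e : Sg w (lshift k e) = (wid (s e).1, wid (s e).2).
Proof. by rewrite ffunE (unsplitK (inl _)). Qed.

Lemma Sg_r w i : Sg w (rshift E i) = (wid (w i), ord_max).
Proof. by rewrite ffunE (unsplitK (inr _)). Qed.

Lemma wid_eq (a b : 'I_V) : (wid a == wid b) = (a == b).
Proof. by rewrite -val_eqE. Qed.

Lemma wid_max (a : 'I_V) : (wid a == ord_max) = false.
Proof. by rewrite -val_eqE /= ltn_eqF. Qed.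

Lemma Sg_inj : injective Sg.
Proof.
move=> w1 w2 H; apply/ffunP => i.
have := f_equal (fun f : {ffun 'I_(E + k) -> 'I_V.+1 * 'I_V.+1} => f (rshift E i)) H.
rewrite /= !Sg_r => -[].
by move=> E1; apply: val_inj.
Qed.

Lemma Sg_ext w : wf_graph s -> extends s (Sg w).
Proof.
move=> /forallP Hs; apply/andP; split; first (apply/andP; split).
- apply/forallP => x; rewrite -(splitK x); case: (fintype.split x) => [e|i] /=.
    by rewrite Sg_l /=; exact: Hs.
  by rewrite Sg_r /=.
- by apply/forallP => e; rewrite Sg_l.
- by apply/forallP => i; rewrite Sg_r /= wid_max eqxx.
Qed.

Lemma ext_Sg s' : extends s s' -> exists w, Sg w = s'.
Proof.
move=> /andP [/andP [_ /forallP Hl] /forallP Hr].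
have : forall i : 'I_k, exists j : 'I_V, wid j = (s' (rshift E i)).1.
  move=> i; have /andP [H1 _] := Hr i.
  rewrite eq_sym in H1.
  have [j Ej _] := unlift_some H1.
  by exists j; rewrite Ej; apply: val_inj; exact: (esym (lift_max j)).
move/fin_all_exists => [u Hu].
exists (finfun u); apply/ffunP => x; rewrite -(splitK x).
case: (fintype.split x) => [e|i] /=.
  by rewrite -/(lshift k e) Sg_l; apply/esym/eqP; exact: Hl.
rewrite -/(rshift E i) Sg_r ffunE Hu.
have /andP [_ /eqP <-] := Hr i.
by case: (s' (rshift E i)).
Qed.

Lemma sum_ext (R : realType) (H : {ffun 'I_(E + k) -> 'I_V.+1 * 'I_V.+1} -> R) :
  wf_graph s ->
  \sum_(s' | extends s s') H s' = \sum_(w : {ffun 'I_k -> 'I_V}) H (Sg w).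
Proof.
move=> Hs; symmetry.
rewrite (partition_big Sg (extends s)) /=; last by move=> w _; exact: Sg_ext.
apply: eq_bigr => s' /ext_Sg [w0 <-].
rewrite (eq_bigl (fun w => w == w0)); first by rewrite big_pred1_eq.
by move=> w /=; rewrite (inj_eq Sg_inj).
Qed.

Variables (m n : {ffun 'I_E -> 'I_(N + N)}) (mu nu : {ffun 'I_k -> 'I_(N + N)})
  (w : {ffun 'I_k -> 'I_V}).

Lemma vi_wid v :
  vertex_indices (Sg w) (ffjoin m mu) (ffjoin n nu) (wid v) =
  vertex_indices s m n v ++ [seq mu i | i <- enum 'I_k & w i == v].
Proof.
rewrite /vertex_indices enum_split filter_cat map_cat !filter_map -!map_comp.
congr (_ ++ _).
  rewrite (@eq_filter _ _ (fun e => ((s e).1 == v) || ((s e).2 == v))); last first.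
    by move=> e /=; rewrite Sg_l /= !wid_eq.
  apply: eq_map => e /=; by rewrite Sg_l /= wid_eq ffjoinl ffjoinl.
rewrite (@eq_filter _ _ (fun i => w i == v)); last first.
  by move=> i /=; rewrite Sg_r /= wid_eq [ord_max == _]eq_sym wid_max orbF.
apply/eq_in_map => i; rewrite mem_filter => /andP [Hi _] /=.
by rewrite Sg_r /= wid_eq Hi ffjoinr.
Qed.

Lemma vi_max :
  vertex_indices (Sg w) (ffjoin m mu) (ffjoin n nu) ord_max =
  [seq nu i | i <- enum 'I_k].
Proof.
rewrite /vertex_indices enum_split filter_cat map_cat !filter_map -!map_comp.
rewrite (@eq_filter _ _ pred0); last first.
  by move=> e /=; rewrite Sg_l /= !wid_max.
rewrite filter_pred0 /=.
rewrite (@eq_filter _ _ predT); last first.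
  by move=> i /=; rewrite Sg_r /= eqxx orbT.
rewrite filter_predT; apply: eq_map => i /=.
by rewrite Sg_r /= wid_max ffjoinr.
Qed.

End Graph.


Lemma reorder (R : realType) (A B C D W : finType) (T : W -> A -> B -> C -> D -> R) :
  \sum_w \sum_a \sum_b \sum_c \sum_d T w a b c d =
  \sum_b \sum_d \sum_(p : A * C) \sum_w T w p.1 b p.2 d.
Proof.
transitivity (\sum_a \sum_b \sum_c \sum_d \sum_w T w a b c d).
  rewrite [LHS]exchange_big; apply: eq_bigr => a _.
  rewrite [LHS]exchange_big; apply: eq_bigr => b _.
  rewrite [LHS]exchange_big; apply: eq_bigr => c _.
  exact: exchange_big.
rewrite [LHS]exchange_big; apply: eq_bigr => b _.
transitivity (\sum_a \sum_d \sum_c \sum_w T w a b c d).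
  by apply: eq_bigr => a _; rewrite [LHS]exchange_big.
rewrite [LHS]exchange_big; apply: eq_bigr => d _.
by rewrite pair_bigA.
Qed.

Lemma ext_fam_wid (R : realType) N V (C : 'I_V -> pt R N -> R) D v :
  ext_fam C D (widen_ord (leqnSn V) v) = C v.
Proof.
rewrite /ext_fam.
have -> : widen_ord (leqnSn V) v = lift ord_max v.
  by apply: val_inj; exact: (esym (lift_max v)).
by rewrite liftK.
Qed.

Lemma ext_fam_max (R : realType) N V (C : 'I_V -> pt R N -> R) D :
  ext_fam C D ord_max = D.
Proof. by rewrite /ext_fam unlift_none. Qed.

Unset Implicit Arguments.
Set Strict Implicit.

Theorem lemma4 (R : realType) (N V E k : nat)
  (s : {ffun 'I_E -> 'I_V * 'I_V}) (C : 'I_V -> 'rV[R]_(N + N) -> R)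
  (D : 'rV[R]_(N + N) -> R) :
  wf_graph s ->
  (forall v, smooth (C v)) -> smooth D ->
  forall z : 'rV[R]_(N + N),
    \sum_(mu : {ffun 'I_k -> 'I_(N + N)}) \sum_(nu : {ffun 'I_k -> 'I_(N + N)})
      pds [seq mu i | i <- enum 'I_k] (lambda s C) z *
      (\prod_(i : 'I_k) Jsymp R (mu i) (nu i)) *
      pds [seq nu i | i <- enum 'I_k] D z
    = \sum_(s' : {ffun 'I_(E + k) -> 'I_V.+1 * 'I_V.+1} | extends s s')
        lambda s' (ext_fam C D) z.
Proof.
move=> Hs HC HD z.
have Hlam : lambda s C = fun y => \sum_(p : {ffun 'I_E -> 'I_(N + N)} * {ffun 'I_E -> 'I_(N + N)})
   (\prod_e Jsymp R (p.1 e) (p.2 e)) *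
   \prod_(v < V) pds (vertex_indices s p.1 p.2 v) (C v) y.
  by apply: funext => y; rewrite /lambda pair_bigA.
have HG : forall p : {ffun 'I_E -> 'I_(N + N)} * {ffun 'I_E -> 'I_(N + N)},
    smooth (fun y => \prod_(v < V) pds (vertex_indices s p.1 p.2 v) (C v) y).
  by move=> p; apply: smooth_prod => v; exact: smooth_pds.
have Hmu : forall mu : {ffun 'I_k -> 'I_(N + N)},
   pds [seq mu i | i <- enum 'I_k] (lambda s C) z =
   \sum_(p : {ffun 'I_E -> 'I_(N + N)} * {ffun 'I_E -> 'I_(N + N)})
     (\prod_e Jsymp R (p.1 e) (p.2 e)) *
     \sum_(w : {ffun 'I_k -> 'I_V}) \prod_(v < V)
        pds (vertex_indices s p.1 p.2 v ++ [seq mu i | i <- enum 'I_k & w i == v]) (C v) z.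
  move=> mu; rewrite Hlam (pds_lin _ HG).
  apply: eq_bigr => p _; congr (_ * _).
  rewrite (leibniz (F := fun v => pds (vertex_indices s p.1 p.2 v) (C v))); last first.
    by move=> v; exact: smooth_pds.
  apply: eq_bigr => w _; apply: eq_bigr => v _.
  by rewrite -pds_cat pds_catC.
have RHSe : forall w : {ffun 'I_k -> 'I_V}, lambda (Sg s w) (ext_fam C D) z =
  \sum_(m : {ffun 'I_E -> 'I_(N + N)}) \sum_(mu : {ffun 'I_k -> 'I_(N + N)})
  \sum_(n : {ffun 'I_E -> 'I_(N + N)}) \sum_(nu : {ffun 'I_k -> 'I_(N + N)})
   ((\prod_e Jsymp R (m e) (n e)) * \prod_(i : 'I_k) Jsymp R (mu i) (nu i)) *
   ((\prod_(v < V) pds (vertex_indices s m n v ++ [seq mu i | i <- enum 'I_k & w i == v]) (C v) z)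
     * pds [seq nu i | i <- enum 'I_k] D z).
  move=> w; rewrite /lambda big_ffun_add; apply: eq_bigr => m _.
  apply: eq_bigr => mu _; rewrite big_ffun_add; apply: eq_bigr => n _.
  apply: eq_bigr => nu _; congr (_ * _).
    rewrite big_split_ord; congr (_ * _); apply: eq_bigr => e _.
      by rewrite !ffjoinl.
    by rewrite !ffjoinr.
  rewrite big_ord_recr /= vi_max ext_fam_max; congr (_ * _).
  by apply: eq_bigr => v _; rewrite vi_wid ext_fam_wid.
transitivity (\sum_(mu : {ffun 'I_k -> 'I_(N + N)}) \sum_(nu : {ffun 'I_k -> 'I_(N + N)})
  \sum_(p : {ffun 'I_E -> 'I_(N + N)} * {ffun 'I_E -> 'I_(N + N)}) \sum_(w : {ffun 'I_k -> 'I_V})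
   ((\prod_e Jsymp R (p.1 e) (p.2 e)) * \prod_(i : 'I_k) Jsymp R (mu i) (nu i)) *
   ((\prod_(v < V) pds (vertex_indices s p.1 p.2 v ++ [seq mu i | i <- enum 'I_k & w i == v]) (C v) z)
     * pds [seq nu i | i <- enum 'I_k] D z)).
  apply: eq_bigr => mu _; apply: eq_bigr => nu _.
  rewrite Hmu !mulr_suml; apply: eq_bigr => p _.
  rewrite mulr_sumr !mulr_suml; apply: eq_bigr => w _.
  by rewrite -!mulrA; congr (_ * _); rewrite mulrCA.
rewrite (sum_ext _ Hs).
rewrite (eq_bigr _ (fun w _ => RHSe w)).
by rewrite reorder.
Qed.
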